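(* Fix $k\in\mathbb{N}$ and positive constants $b_0,b_1,b_2,\lambda_0,\lambda_1$. There exists $C>0$ depending only on $b_0,b_1,\lambda_0,\lambda_1$ (and the fixed $k$) such that the following holds. Let $T\geq10$, $\ell<r$, $a^\pm\in\mathbb{R}^k$, $g:[\ell,r]\to\mathbb{R}$ Lipschitz with $g(\ell)=g(r)=0$, and $P\subset(\ell,\ell+T^{1/2})\cap(\ell,r)$ finite. Suppose that $r-\ell\leq b_0T$, $|P|\leq b_0T$, $|g(x)-g(y)|\leq b_1T|x-y|$ for all $x,y$, $a^\pm_j-a^\pm_{j+1}\geq\lambda_0T^{1/2}$ for $j\in\{1,\dots,k-1\}$, $a^-_k-g(\ell)\geq\lambda_1T$, $a^+_k-g(r)\geq\lambda_1T$, $a^-_1-g(\ell)\leq b_2T^2$, $a^+_1-g(r)\leq b_2T^2$. Then $\mathbb{E}_{\mathrm{free}}[W]\geq C^{-1}e^{-CT^{5/2}}$.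
   Context: $\mathbb{P}_{\mathrm{free}}$ (expectation $\mathbb{E}_{\mathrm{free}}$) is the law of $k$ independent Brownian bridges (diffusion parameter one) $\mathcal{L}=(\mathcal{L}_1,\dots,\mathcal{L}_k)$ on $[\ell,r]$ with $\mathcal{L}_j(\ell)=a^-_j$, $\mathcal{L}_j(r)=a^+_j$. $W(\mathcal{L})=1$ if $\mathcal{L}_j(p)>g(p)$ for all $p\in P$ and $j\in\{1,\dots,k\}$, and $W(\mathcal{L})=0$ otherwise. *)

(* Defs.v *)
From HB Require Import structures.
From mathcomp Require Import all_boot all_order all_algebra.
From mathcomp Require Import all_classical all_reals all_analysis.
Set Implicit Arguments. Unset Strict Implicit. Unset Printing Implicit Defensive.
Import Order.TTheory GRing.Theory Num.Theory.
Local Open Scope classical_set_scope.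
Local Open Scope ring_scope.

Definition heat_kernel {R : realType} (t x y : R) : R :=
  (Num.sqrt (2 * pi * t))^-1 * expR (- ((y - x) ^+ 2) / (2 * t)).

(* Unnormalised finite-dimensional integral of a Brownian bridge ending at
   (r, b): starting from (t0, x0), visiting the (increasing) times ts, the value
   at time t being constrained to lie in B t. *)
Fixpoint bb_int {R : realType} (r b : R) (ts : seq R) (B : R -> set R)
    (t0 x0 : R) : \bar R :=
  match ts with
  | [::] => (heat_kernel (r - t0) x0 b)%:E
  | t :: ts' =>
      (\int[@lebesgue_measure R]_(y in B t)
          ((heat_kernel (t - t0) x0 y)%:E * bb_int r b ts' B t y))%E
  end.

(* P(X(t) in B t for all t in ts) for a Brownian bridge X from (l,a) to (r,b),
   given by its finite-dimensional (Gaussian, Markov) density. *)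
Definition bb_fdd {R : realType} (l r a b : R) (ts : seq R) (B : R -> set R)
  : \bar R :=
  (bb_int r b ts B l a * ((heat_kernel (r - l) a b)^-1)%:E)%E.

(* L = (L_1,...,L_k) is a family of k independent Brownian bridges
   (diffusion parameter one) on [l,r] with L_j(l) = am j, L_j(r) = ap j,
   defined on the probability space (Omega, Pr): its finite-dimensional
   distributions (on rectangles, which determine them) are those of
   independent Brownian bridges. *)
Definition free_bridges {R : realType} (k : nat) (l r : R) (am ap : 'I_k -> R)
    {d : measure_display} {Omega : measurableType d}
    (Pr : probability Omega R) (L : 'I_k -> R -> Omega -> R) : Prop :=
  [/\ (forall j t, measurable_fun setT (L j t)),
      (forall j w, L j l w = am j /\ L j r w = ap j) &
      (forall (ts : seq R), sorted <%R ts ->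
         all (fun t => (l < t) && (t < r)) ts ->
         forall B : 'I_k -> R -> set R, (forall j t, measurable (B j t)) ->
         Pr [set w | forall j t, t \in ts -> B j t (L j t w)]
         = (\prod_(j < k) bb_fdd l r (am j) (ap j) ts (B j))%E)].

(* The event {W = 1}: all curves lie strictly above g at all points of P. *)
Definition W_event {R : realType} (k : nat) {Omega : Type}
    (L : 'I_k -> R -> Omega -> R) (g : R -> R) (P : seq R) : set Omega :=
  [set w | forall (j : 'I_k) (p : R), p \in P -> g p < L j p w].

(* Main.v *)
Require Import Defs.
From HB Require Import structures.
From mathcomp Require Import all_boot all_order all_algebra.
From mathcomp Require Import all_classical all_reals all_analysis.
From mathcomp Require Import ring lra.
Import Order.TTheory GRing.Theory Num.Theory.
Import numFieldNormedType.Exports.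
Local Open Scope classical_set_scope.
Local Open Scope ring_scope.

Section S.
Variable R : realType.
Import HBNNSimple.

Lemma heat_ge0 (t x y : R) : 0 <= heat_kernel t x y.
Proof.
rewrite /heat_kernel mulr_ge0 // ?invr_ge0 ?sqrtr_ge0 // ltW // expR_gt0.
Qed.

Lemma heat_gt0 (t x y : R) : 0 < t -> 0 < heat_kernel t x y.
Proof.
move=> t0; rewrite /heat_kernel mulr_gt0 ?expR_gt0 // invr_gt0 sqrtr_gt0.
by rewrite !mulr_gt0 // pi_gt0.
Qed.

Lemma heat_prod (s u x y b : R) : 0 < s -> 0 < u ->
  heat_kernel s x y * heat_kernel u y b =
  heat_kernel (s + u) x b *
  ((Num.sqrt (2 * pi * (s * u / (s + u))))^-1 *
    expR (- ((y - (u * x + s * b) / (s + u)) ^+ 2) / (2 * (s * u / (s + u))))).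
Proof.
move=> s0 u0.
have su0 : 0 < s + u by rewrite addr_gt0.
have pi0 : 0 < pi :> R by exact: pi_gt0.
rewrite /heat_kernel.
rewrite mulrACA [in RHS]mulrACA -!invfM -!expRD.
congr (_ * _); last first.
  congr expR.
  field; by rewrite !gt_eqF.
congr (_^-1).
rewrite -!sqrtrM ?mulr_ge0 ?ltW ?divr_gt0 ?mulr_gt0 //.
congr Num.sqrt; field.
by rewrite gt_eqF.
Qed.



Lemma int_lb_nnsfun (D : set R) (f : R -> \bar R) (h : {nnsfun R >-> R}) :
  (forall x, D x -> (0 <= f x)%E) -> (forall x, D x -> ((h x)%:E <= f x)%E) ->
  (\int[@lebesgue_measure R]_(x in D) (h x)%:E <= \int[@lebesgue_measure R]_(x in D) f x)%E.
Proof.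
move=> f0 hf.
rewrite !ge0_integralE //; last by move=> x _; rewrite lee_fin.
apply: ereal_sup_le => z [g gh <-]; exists g => // x.
apply: (le_trans (gh x)); rewrite /patch; case: ifP => // /set_mem Dx.
exact: hf.
Qed.

Lemma int_lb_itv (D : set R) (f : R -> \bar R) (c a b : R) :
  measurable D ->
  0 <= c -> a <= b -> `]a, b] `<=` D ->
  (forall x, D x -> (0 <= f x)%E) -> (forall x, a < x <= b -> (c%:E <= f x)%E) ->
  ((c * (b - a))%:E <= \int[@lebesgue_measure R]_(x in D) f x)%E.
Proof.
move=> mD c0 ab ID f0 fc.
have mI : measurable (`]a, b] : set R) by [].
pose h : {nnsfun R >-> R} := mul_nnsfun (cst_nnsfun R (NngNum c0)) (indic_nnsfun R mI).
apply: (le_trans _ (@int_lb_nnsfun D f h f0 _)); last first.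
  move=> x Dx /=; rewrite /h /= measurable_realfun.mindicE /indic /=.
  case: (boolP (x \in `]a, b]%classic)) => xI; rewrite ?mulr1 ?mulr0.
    by apply: fc; move: xI; rewrite inE /= in_itv /=.
  exact: f0.
rewrite /h /=.
rewrite (_ : (fun x => _) = (fun x => (c * \1_(`]a, b]%classic : set R) x)%:E)); last first.
  by apply/funext => x.
rewrite integralZl_indic //=; last by move=> /(lt_le_trans) /(_ c0); rewrite ltxx.
rewrite integral_indic // (setIidl ID).
have := @lebesgue_measure_itv R `]a, b]; rewrite /= => ->.
case: ifP; rewrite lte_fin => ab'; first by rewrite -EFinD -EFinM.
have -> : b = a by apply/eqP; rewrite eq_le ab /= leNgt ab'.
by rewrite subrr mulr0 mule0.
Qed.

Definition c0 : R := (Num.sqrt (2 * pi))^-1 * expR (-1).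

Lemma c0_gt0 : 0 < c0.
Proof. by rewrite /c0 mulr_gt0 ?expR_gt0 // invr_gt0 sqrtr_gt0 mulr_gt0 // pi_gt0. Qed.

Lemma step (s u x b K h beta : R) (F : R -> \bar R) :
  0 < s -> 0 < u -> 0 <= K -> 0 <= beta ->
  h <= (u * x + s * b) / (s + u) + 2 * beta * s * u / (s + u) ->
  (forall y, h < y -> (0 <= F y)%E) ->
  (forall y, h < y -> ((K * heat_kernel u y b)%:E <= F y)%E) ->
  ((K * heat_kernel (s + u) x b * c0 * expR (- (4 * beta ^+ 2 * s)))%:E <=
   \int[@lebesgue_measure R]_(y in `]h, +oo[) ((heat_kernel s x y)%:E * F y))%E.
Proof.
move=> s0 u0 K0 be0 hle F0 FK.
have su0 : 0 < s + u by rewrite addr_gt0.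
have pi0 : 0 < pi :> R by exact: pi_gt0.
set m := (u * x + s * b) / (s + u).
set D := 2 * beta * s * u / (s + u).
set v := s * u / (s + u).
have v0 : 0 < v by rewrite divr_gt0 ?mulr_gt0.
have D0 : 0 <= D by rewrite /D divr_ge0 // ?mulr_ge0 // ltW.
set w := Num.sqrt v.
have w0 : 0 <= w by rewrite sqrtr_ge0.
have wv : w ^+ 2 = v by rewrite sqr_sqrtr // ltW.
set H := heat_kernel (s + u) x b.
have H0 : 0 <= H by exact: heat_ge0.
pose c := K * H * ((Num.sqrt (2 * pi * v))^-1 * expR (- (D ^+ 2 / v + 1))).
have c0' : 0 <= c.
  by rewrite /c !mulr_ge0 // ?invr_ge0 ?sqrtr_ge0 // ltW // expR_gt0.
apply: (le_trans _ (@int_lb_itv `]h, +oo[ _ c (m + D) (m + D + w) _ _ _ _ _ _)).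
- have cw : c * (m + D + w - (m + D)) = K * H * c0 * expR (- (D ^+ 2 / v)).
    rewrite addrAC subrr add0r /c /c0 sqrtrM ?mulr_ge0 ?ltW // opprD expRD -/w.
    have wne : w != 0 by rewrite gt_eqF // sqrtr_gt0.
    have pne : Num.sqrt (2 * pi) != 0 :> R by rewrite gt_eqF // sqrtr_gt0 mulr_gt0.
rewrite invfM; move: wne pne; set A := Num.sqrt (2 * pi); set E1 := expR _; set E2 := expR _; move: (w) => W1 wne pne.
    have gen : forall (a1 b1 d1 e1 f1 : R), f1 != 0 -> a1 * (b1 / f1 * (d1 * e1)) * f1 = a1 * (b1 * e1) * d1 by move=> *; field.
    exact: gen.
  rewrite cw lee_fin.
  apply: ler_wpM2l; first by rewrite !mulr_ge0 // ltW // c0_gt0.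
  rewrite ler_expR lerN2.
  have -> : D ^+ 2 / v = 4 * beta ^+ 2 * s * (u / (s + u)).
    rewrite /D /v; field; by rewrite !gt_eqF.
  rewrite -[X in _ <= X]mulr1 ler_wpM2l //.
    by rewrite !mulr_ge0 // ?sqr_ge0 // ltW.
  rewrite ler_pdivrMr // mul1r; lra.
- by [].
- exact: c0'.
- lra.
- by move=> y /=; rewrite !in_itv /= andbT => /andP [] /(le_lt_trans hle) ->.
- move=> y /= ; rewrite in_itv /= andbT => hy.
  by rewrite mule_ge0 // ?lee_fin ?heat_ge0 // F0.
- move=> y /andP [y1 y2].
  have hy : h < y by apply: le_lt_trans y1.
  apply: (le_trans _ (lee_wpmul2l _ (FK y hy))); last by rewrite lee_fin heat_ge0.
  rewrite -EFinM lee_fin mulrCA heat_prod // -/m -/v -/H /c mulrA.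
  set Q := Num.sqrt _; set E := expR (- (y - m) ^+ 2 / _).
  have -> : K * (H * (Q^-1 * E)) = K * H / Q * E by rewrite !mulrA.
  apply: ler_wpM2l; first by rewrite mulr_ge0 // ?invr_ge0 ?sqrtr_ge0 // mulr_ge0.

  rewrite ler_expR mulNr lerN2.
  rewrite ler_pdivrMr ?mulr_gt0 //.
  have : (y - m) ^+ 2 <= 2 * D ^+ 2 + 2 * w ^+ 2.
    have z1 : D < y - m by lra.
    have z2 : y - m <= D + w by lra.
    have : 0 <= (D + w - (y - m)) * (D + w + (y - m)) by apply: mulr_ge0; lra.
    have := sqr_ge0 (D - w). nra.
  rewrite wv => /le_trans; apply.
  have e : (D ^+ 2 / v + 1) * (2 * v) = 2 * D ^+ 2 + 2 * v.
    by field; rewrite gt_eqF.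
  by rewrite e.

by rewrite invr_gt0.
Qed.


Section Ind.
Variables (l r b beta : R) (g : R -> R).
Hypothesis Lip : forall x y, l <= x <= r -> l <= y <= r -> `|g x - g y| <= beta * `|x - y|.
Hypothesis gr0 : g r = 0.
Hypothesis b0 : 0 <= b.
Hypothesis beta0 : 0 <= beta.

Definition Bg : R -> set R := fun t => `]g t, +oo[%classic.

Lemma ind (ts : seq R) : forall t0 x, l <= t0 -> t0 < r -> path <%R t0 ts ->
  all (fun t => t < r) ts -> g t0 <= x ->
  ((c0 ^+ size ts * expR (- (4 * beta ^+ 2 * (last t0 ts - t0))) *
     heat_kernel (r - t0) x b)%:E <= bb_int r b ts Bg t0 x)%E.
Proof.
elim: ts => [|t ts IH] t0 x lt0 t0r.
  by move=> _ _ _ /=; rewrite expr0 mul1r subrr mulr0 oppr0 expR0 mul1r.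
move=> /= /andP [t0t pth] /andP [tr alls] gx.
have lt : l <= t by rewrite (le_trans lt0) // ltW.
set K := c0 ^+ size ts * expR (- (4 * beta ^+ 2 * (last t ts - t))).
have K0 : 0 <= K by rewrite mulr_ge0 ?exprn_ge0 ?ltW ?c0_gt0 ?expR_gt0.
have s0 : 0 < t - t0 by rewrite subr_gt0.
have u0 : 0 < r - t by rewrite subr_gt0.
have FK : forall y, g t < y ->
    ((K * heat_kernel (r - t) y b)%:E <= bb_int r b ts Bg t y)%E.
  by move=> y gy; apply: IH => //; apply: ltW.
have := @step (t - t0) (r - t) x b K (g t) beta (bb_int r b ts Bg t) s0 u0 K0 beta0.
have -> : t - t0 + (r - t) = r - t0 by ring.
move=> H; apply: le_trans (H _ _ _); last 3 first.
- have gts : g t - g t0 <= beta * (t - t0).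
    apply: le_trans (ler_norm _) _; rewrite -(gtr0_norm s0); apply: Lip.
      by rewrite lt ltW.
    by rewrite lt0 ltW.
  have gtr : g t <= beta * (r - t).
    have e : g t = g t - g r by rewrite gr0 subr0.
    rewrite e; apply: le_trans (ler_norm _) _; rewrite -(gtr0_norm u0) distrC; apply: Lip.
      by rewrite lexx andbT ltW // (le_lt_trans lt0).
    by rewrite lt ltW.
  have su0 : 0 < r - t0 by rewrite subr_gt0 (lt_trans t0t).
  rewrite -mulrDl ler_pdivlMr //.
  have h1 : (r - t) * g t0 <= (r - t) * x by rewrite ler_wpM2l // ltW.
  have h2 : (t - t0) * g t <= (t - t0) * (beta * (r - t)) by rewrite ler_wpM2l // ltW.
  have h3 : (r - t) * g t <= (r - t) * (g t0 + beta * (t - t0)).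
    by apply: ler_wpM2l; [exact: ltW | lra].
  have h4 : 0 <= (t - t0) * b by rewrite mulr_ge0 // ltW.
  nra.
- move=> y gy; apply: le_trans (FK y gy).
  by rewrite lee_fin mulr_ge0 // heat_ge0.
- exact: FK.
rewrite lee_fin /K /=.
rewrite le_eqVlt; apply/orP; left; apply/eqP.
rewrite exprS -[in RHS](mulrC c0) [in RHS](mulrC _ (expR (- (4 * beta ^+ 2 * (t - t0))))).
set E1 := expR (- (4 * beta ^+ 2 * (last t ts - t0))).
have -> : E1 = expR (- (4 * beta ^+ 2 * (last t ts - t))) * expR (- (4 * beta ^+ 2 * (t - t0))).
  by rewrite -expRD; congr expR; ring.
ring.
Qed.

End Ind.
End S.
Arguments Bg {R} g t.
Arguments heat_ge0 {R}.
Arguments heat_gt0 {R}.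

Lemma prod_lb {R : realType} (k : nat) (q : R) (f : 'I_k -> \bar R) :
  0 <= q -> (forall j, (q%:E <= f j)%E) ->
  ((q ^+ k)%:E <= \prod_(j < k) f j)%E.
Proof.
move=> q0 qf.
have : (0 <= \prod_(j < k) q%:E /\ \prod_(j < k) q%:E <= \prod_(j < k) f j)%E.
  apply: (big_rec2 (fun a b => 0 <= a /\ a <= b)%E) => //.
  move=> j y1 y2 _ [y10 y12]; split; first by rewrite mule_ge0.
  by apply: lee_pmul.
by rewrite prodEFin prodr_const card_ord => -[].
Qed.

Theorem mainTheorem4 (R : realType) (k : nat) (b0 b1 lam0 lam1 : R) :
  0 < b0 -> 0 < b1 -> 0 < lam0 -> 0 < lam1 ->
  exists C : R, 0 < C /\
  forall (b2 : R), 0 < b2 ->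
  forall (T l r : R) (am ap : 'I_k -> R) (g : R -> R) (P : seq R),
    10 <= T -> l < r ->
    g l = 0 -> g r = 0 ->
    uniq P ->
    all (fun p => (l < p) && (p < l + Num.sqrt T) && (p < r)) P ->
    r - l <= b0 * T ->
    (size P)%:R <= b0 * T ->
    (forall x y, l <= x <= r -> l <= y <= r ->
        `|g x - g y| <= b1 * T * `|x - y|) ->
    (forall (j j' : 'I_k), nat_of_ord j' = (nat_of_ord j).+1 ->
        am j - am j' >= lam0 * Num.sqrt T /\ ap j - ap j' >= lam0 * Num.sqrt T) ->
    (forall (j : 'I_k), (nat_of_ord j).+1 = k ->
        am j - g l >= lam1 * T /\ ap j - g r >= lam1 * T) ->
    (forall (j : 'I_k), nat_of_ord j = 0%N ->
        am j - g l <= b2 * T ^+ 2 /\ ap j - g r <= b2 * T ^+ 2) ->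
    forall (d : measure_display) (Omega : measurableType d)
           (Pr : probability Omega R) (L : 'I_k -> R -> Omega -> R),
      free_bridges l r am ap Pr L ->
      ((C^-1 * expR (- (C * T `^ (5%:R / 2%:R))))%:E
         <= Pr (W_event L g P))%E.
Proof.
move=> b00 b10 lam00 lam10.
have c0le1 : c0 R <= 1.
  have s1 : 1 < Num.sqrt (2 * pi) :> R.
    rewrite -[X in X < _]sqrtr1 ltr_sqrt; last by rewrite mulr_gt0 // pi_gt0.
    by have := pi_ge2 R; lra.
  rewrite /c0; apply: (@le_trans _ _ (1 * 1)); last by rewrite mulr1.
  apply: ler_pM; rewrite ?invr_ge0 ?sqrtr_ge0 ?ltW ?expR_gt0 //.
    by rewrite invf_lt1 // (lt_trans _ s1).
set Lc := - ln (c0 R).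
have Lc0 : 0 <= Lc by rewrite /Lc oppr_ge0 ln_le0.
set A := b0 * Lc + 4 * b1 ^+ 2.
have A0 : 0 <= A by rewrite /A addr_ge0 ?mulr_ge0 ?sqr_ge0 // ltW.
exists (k%:R * A + 1); split.
  by rewrite ltr_pwDr // mulr_ge0.
move=> b2 b20 T l r am ap g P T10 lr gl gr uP allP rl sizeP Lip gaps lastj firstj
  d Omega Pr L [Lm Lend Lfdd].
have T1 : 1 <= T by lra.
have T0 : 0 < T by lra.
have sT1 : 1 <= Num.sqrt T by rewrite -[X in X <= _]sqrtr1 ler_sqrt // ltW.
have amge : forall (n : nat) (j : 'I_k), (k - j.+1)%N = n -> 0 <= am j /\ 0 <= ap j.
  elim=> [|n IH] j.
    move=> /eqP; rewrite subn_eq0 => jk.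
    have jk' : j.+1 = k by apply/eqP; rewrite eqn_leq jk ltn_ord.
    have [h1 h2] := lastj j jk'; rewrite gl gr !subr0 in h1 h2.
    by split; [apply: le_trans h1 | apply: le_trans h2]; rewrite mulr_ge0 // ltW.
  move=> hn.
  have jk : (j.+1 < k)%N by rewrite -subn_gt0 hn.
  have [h1 h2] := gaps j (Ordinal jk) erefl.
  have [i1 i2] := IH (Ordinal jk) ltac:(by rewrite /= subnS hn).
  have h0 : 0 <= lam0 * Num.sqrt T by rewrite mulr_ge0 // ltW.
  split; lra.
have amg j : 0 <= am j /\ 0 <= ap j by exact: (amge _ j erefl).
set ts := sort <=%R P.
have sts : sorted <%R ts by rewrite sort_lt_sorted.
have allts : all (fun p => (l < p) && (p < l + Num.sqrt T) && (p < r)) ts by rewrite all_sort.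
have WE : W_event L g P = [set w | forall j t, t \in ts -> Bg g t (L j t w)].
  apply/seteqP; split => w /= H j t tP.
    have tP' : t \in P by rewrite -(mem_sort <=%R).
    by have := H j t tP'; rewrite /Bg /= in_itv /= andbT.
  have tP' : t \in ts by rewrite mem_sort.
  by have := H j t tP'; rewrite /Bg /= in_itv /= andbT.
have allin : all (fun t => (l < t) && (t < r)) ts.
  by apply: sub_all allts => t /andP [/andP [-> _] ->].
rewrite WE (Lfdd ts sts allin (fun _ => Bg g)) //; last first.
  by move=> j t; rewrite /Bg.
set X := T `^ (5%:R / 2%:R).
have XE : X = T ^+ 2 * Num.sqrt T.
  rewrite /X (_ : 5%:R / 2%:R = 2%:R + 2^-1 :> R); last by field.
  rewrite powRD; last by rewrite gt_eqF ?implybT.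
  by rewrite powR_mulrn ?ltW // powR12_sqrt // ltW.
have X0 : 0 <= X by rewrite XE mulr_ge0 ?sqr_ge0 ?sqrtr_ge0.
set n := size ts.
have nle : n%:R <= b0 * T by rewrite /n size_sort.
have lastle : last l ts - l <= Num.sqrt T.
  have := mem_last l ts; rewrite inE => /orP [/eqP -> | ].
    by rewrite subrr sqrtr_ge0.
  move=> lt; move/seq.allP: allts => /(_ _ lt) /andP [/andP [_ h] _]; lra.
set q := c0 R ^+ n * expR (- (4 * (b1 * T) ^+ 2 * (last l ts - l))).
have q0 : 0 <= q by rewrite mulr_ge0 ?exprn_ge0 ?ltW ?c0_gt0 ?expR_gt0.
have qlb : expR (- (A * X)) <= q.
  have c0E : c0 R = expR (- Lc) by rewrite /Lc opprK lnK // posrE c0_gt0.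
  rewrite /q c0E -expRM_natl -expRD ler_expR.
  have h1 : n%:R * Lc <= b0 * Lc * X.
    have : T <= X.
      rewrite XE; have : 1 <= T ^+ 2 by rewrite expr_ge1 // ltW.
      nra.
    move=> TX; have nX : n%:R <= b0 * X by apply: le_trans nle _; rewrite ler_wpM2l // ltW.
    by rewrite mulrAC; apply: ler_wpM2r.
  have h2 : 4 * (b1 * T) ^+ 2 * (last l ts - l) <= 4 * b1 ^+ 2 * X.
    apply: (@le_trans _ _ (4 * (b1 * T) ^+ 2 * Num.sqrt T)).
      by apply: ler_wpM2l => //; rewrite mulr_ge0 // sqr_ge0.
    by rewrite XE le_eqVlt; apply/orP; left; apply/eqP; ring.
  rewrite /A; lra.
have fdd_lb : forall j : 'I_k, (q%:E <= bb_fdd l r (am j) (ap j) ts (Bg g))%E.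
  move=> j.
  have [amj apj] := amg j.
  have beta0 : 0 <= b1 * T by rewrite mulr_ge0 // ltW.
  have := @ind R l r (ap j) (b1 * T) g Lip gr apj beta0 ts l (am j) (lexx l) lr.
  rewrite path_sortedE; last exact: lt_trans.
  rewrite sts andbT.
  have -> : all (<%R l) ts by apply: sub_all allts => t /andP [/andP [-> _] _].
  have -> : all (fun t => t < r) ts by apply: sub_all allts => t /andP [_ ->].
  rewrite gl => /(_ erefl erefl amj) H.
  rewrite /bb_fdd; apply: le_trans (lee_wpmul2r _ H); last first.
    by rewrite lee_fin invr_ge0 heat_ge0.
  rewrite -EFinM lee_fin -/q -mulrA divff ?mulr1 // gt_eqF // heat_gt0 // subr_gt0 lr //.
apply: (le_trans _ (@prod_lb R k q (fun j => bb_fdd l r (am j) (ap j) ts (Bg g)) q0 fdd_lb)).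
rewrite lee_fin.
have Cge1 : 1 <= k%:R * A + 1 by rewrite lerDr mulr_ge0.
apply: (@le_trans _ _ (expR (- (k%:R * A * X)))).
  apply: (@le_trans _ _ (1 * expR (- ((k%:R * A + 1) * X)))).
    apply: ler_wpM2r; first exact/ltW/expR_gt0.
    by rewrite invf_le1 // (lt_le_trans _ Cge1).
  by rewrite mul1r ler_expR lerN2 ler_wpM2r // lerDl.
have -> : - (k%:R * A * X) = k%:R * (- (A * X)) by ring.
rewrite expRM_natl; apply: lerXn2r => //.
by rewrite nnegrE ltW // expR_gt0.
Qed.
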